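(* Let $0<a_1\le a_2$ and $q\ge 2$. Let $e_1,e_2,\ldots$ be a sequence of non-negative integers with $$a_1 q^n/n \le e_n \le a_2 q^n/n\quad\text{for all } n\ge1,$$ and define $d_0=1,d_1,d_2,\ldots$ by the formal power series identity $\sum_{n\ge0} d_n x^n = \prod_{n\ge1}(1-x^n)^{-e_n}$. Then there exist constants $A_1$ depending only on $a_1$ and $A_2$ depending only on $a_2$ such that for all $n\ge 0$, $$(n+1)^{A_1}q^n \le d_n \le (n+1)^{A_2}q^n.$$ *)

(* Defs.v *)
From Stdlib Require Import Reals Arith List.
Open Scope R_scope.

Fixpoint binom (n k : nat) : nat :=
  match n, k with
  | _, O => 1
  | O, S _ => 0
  | S n', S k' => (binom n' k' + binom n' (S k'))%nat
  end.

(* Coefficient of x^(k*j) in (1 - x^k)^(-e), namely C(e+j-1, j)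
   (with truncated subtraction this also gives the right value for e = 0). *)
Definition negbin_coef (e j : nat) : nat := binom (e + j - 1) j.

(* partial_prod e m n = coefficient of x^n in  prod_{k=1}^m (1 - x^k)^(-e k). *)
Fixpoint partial_prod (e : nat -> nat) (m n : nat) : nat :=
  match m with
  | O => if Nat.eqb n 0 then 1%nat else 0%nat
  | S m' =>
      list_sum (map (fun j =>
        if Nat.leb (S m' * j) n
        then (negbin_coef (e (S m')) j * partial_prod e m' (n - S m' * j))%nat
        else 0%nat) (seq 0 (S n)))
  end.

(* d_n = coefficient of x^n in prod_{k>=1} (1 - x^k)^(-e_k); factors with
   k > n do not contribute to x^n, so it equals partial_prod e n n. *)
Definition dcoef (e : nat -> nat) (n : nat) : nat := partial_prod e n n.

(* Main.v *)
Require Import Defs.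
From Stdlib Require Import Reals Arith List Lra Lia.
Open Scope R_scope.

Lemma binom_gt (n k : nat) : (n < k)%nat -> binom n k = 0%nat.
Proof.
  revert k; induction n as [|n IH]; intros [|k] H; simpl; try lia; try reflexivity.
  rewrite !IH; lia.
Qed.

Lemma binom_1 (n : nat) : binom n 1 = n.
Proof. induction n; simpl; auto. rewrite IHn. destruct n; simpl; lia. Qed.

Lemma nb0 e : negbin_coef e 0 = 1%nat.
Proof. unfold negbin_coef; destruct (e + 0 - 1)%nat; reflexivity. Qed.

Lemma nb_zero j : negbin_coef 0 (S j) = 0%nat.
Proof. unfold negbin_coef. apply binom_gt. lia. Qed.

Lemma nb_rec e j : negbin_coef (S e) (S j) = (negbin_coef e (S j) + negbin_coef (S e) j)%nat.
Proof.
  unfold negbin_coef.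
  replace (S e + S j - 1)%nat with (S (e + j)) by lia.
  replace (e + S j - 1)%nat with (e + j)%nat by lia.
  replace (S e + j - 1)%nat with (e + j)%nat by lia.
  simpl. lia.
Qed.

Fixpoint ssum (e : nat) (y : R) (J : nat) : R :=
  match J with
  | O => 1
  | S J' => ssum e y J' + INR (negbin_coef e (S J')) * y ^ (S J')
  end.

Lemma ssum0 y J : ssum 0 y J = 1.
Proof. induction J; simpl; auto. rewrite nb_zero, IHJ; simpl; ring. Qed.

Lemma ssum_rec e y J : ssum (S e) y (S J) = ssum e y (S J) + y * ssum (S e) y J.
Proof.
  induction J.
  - simpl. rewrite nb_rec, plus_INR, nb0. simpl. ring.
  - assert (E1 : ssum (S e) y (S (S J)) = ssum (S e) y (S J) + INR (negbin_coef (S e) (S (S J))) * y ^ (S (S J))) by reflexivity.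
    assert (E2 : ssum e y (S (S J)) = ssum e y (S J) + INR (negbin_coef e (S (S J))) * y ^ (S (S J))) by reflexivity.
    assert (E3 : ssum (S e) y (S J) = ssum (S e) y J + INR (negbin_coef (S e) (S J)) * y ^ (S J)) by reflexivity.
    rewrite E1, E2, nb_rec, plus_INR. rewrite IHJ at 1. rewrite E3. rewrite <- tech_pow_Rmult. ring.
Qed.

Lemma ssum_nonneg e y J : 0 <= y -> 0 <= ssum e y J.
Proof.
  intros Hy; induction J; simpl; try lra.
  apply Rplus_le_le_0_compat; auto. apply Rmult_le_pos. apply pos_INR.
  apply Rmult_le_pos; auto. apply pow_le; auto.
Qed.

Lemma ssum_bound e y J : 0 <= y < 1 -> ssum e y J <= exp (INR e * (y / (1 - y))).
Proof.
  intros Hy. revert J; induction e as [|e IH]; intros J.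
  - rewrite ssum0. simpl. rewrite Rmult_0_l, exp_0. lra.
  - assert (Hs : ssum (S e) y J * (1 - y) <= ssum e y J).
    { destruct J.
      + simpl. nra.
      + rewrite ssum_rec. pose proof (ssum_nonneg (S e) y J (proj1 Hy)).
        assert (ssum (S e) y J <= ssum (S e) y (S J)).
        { simpl. pose proof (pos_INR (negbin_coef (S e) (S J))).
          pose proof (pow_le y J (proj1 Hy)).
          assert (0 <= INR (negbin_coef (S e) (S J)) * (y * y ^ J)) by (apply Rmult_le_pos; [lra| apply Rmult_le_pos; lra]). lra. }
        rewrite ssum_rec in H0. pose proof (Rmult_le_compat_l y _ _ (proj1 Hy) H0). nra. }
    pose proof (IH J) as H1.
    pose proof (exp_ineq1_le (y / (1 - y))) as H2.
    rewrite S_INR. replace ((INR e + 1) * (y / (1 - y))) with (INR e * (y / (1 - y)) + y / (1 - y)) by ring.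
    rewrite exp_plus.
    assert (ssum (S e) y J <= exp (INR e * (y / (1 - y))) * / (1 - y)).
    { apply Rmult_le_reg_r with (1 - y). lra.
      rewrite Rmult_assoc, Rinv_l by lra. lra. }
    assert (/ (1 - y) = 1 + y / (1 - y)) by (field; lra).
    pose proof (exp_pos (INR e * (y / (1 - y)))). nra.
Qed.

Lemma lsum_bound (f : nat -> nat) e y M c J :
  (forall j, (j <= J)%nat -> INR (f j) * c <= INR (negbin_coef e j) * y ^ j * M) ->
  INR (list_sum (map f (seq 0 (S J)))) * c <= ssum e y J * M.
Proof.
  induction J as [|J IH]; intros H.
  - simpl. rewrite Nat.add_0_r. specialize (H 0%nat (le_n _)). rewrite nb0 in H. simpl in H. lra.
  - rewrite seq_S, map_app, list_sum_app, plus_INR. simpl (0 + S J)%nat.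
    replace (list_sum (map f (S J :: nil))) with (f (S J)) by (simpl; lia).
    assert (H1 := IH (fun j Hj => H j (le_S _ _ Hj))).
    assert (H2 := H (S J) (le_n _)).
    change (ssum e y (S J)) with (ssum e y J + INR (negbin_coef e (S J)) * y ^ (S J)).
    rewrite !Rmult_plus_distr_r. lra.
Qed.

Lemma pp_S e m n : partial_prod e (S m) n = list_sum (map (fun j =>
        if Nat.leb (S m * j) n
        then (negbin_coef (e (S m)) j * partial_prod e m (n - S m * j))%nat
        else 0%nat) (seq 0 (S n))).
Proof. reflexivity. Qed.

Fixpoint Esum (e : nat -> nat) (x : R) (m : nat) : R :=
  match m with
  | O => 0
  | S m' => Esum e x m' + INR (e (S m')) * (x ^ (S m') / (1 - x ^ (S m')))
  end.

Lemma pp_bound (e : nat -> nat) x : 0 <= x < 1 ->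
  forall m n, INR (partial_prod e m n) * x ^ n <= exp (Esum e x m).
Proof.
  intros Hx. induction m as [|m IH]; intros n.
  - simpl. rewrite exp_0. destruct n; simpl. lra.
    rewrite Rmult_0_l; lra.
  - rewrite (pp_S e m n). set (s := S m). set (y := x ^ s).
    assert (Hy : 0 <= y < 1).
    { unfold y, s. apply pow_lt_1_compat; auto; lia. }

    apply Rle_trans with (ssum (e s) y n * exp (Esum e x m)).
    + apply lsum_bound. intros j Hj.
      destruct (Nat.leb_spec (s * j) n) as [Hle|Hgt].
      * rewrite mult_INR.
        replace (x ^ n) with (y ^ j * x ^ (n - s * j)%nat).
        2:{ unfold y. rewrite <- pow_mult, <- pow_add. f_equal. lia. }
        pose proof (IH (n - s * j)%nat).
        pose proof (pos_INR (negbin_coef (e s) j)).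
        pose proof (pow_le y j (proj1 Hy)).
        assert (0 <= INR (negbin_coef (e s) j) * y ^ j) by (apply Rmult_le_pos; lra).
        replace (INR (negbin_coef (e s) j) * INR (partial_prod e m (n - s * j)) * (y ^ j * x ^ (n - s * j)))
          with ((INR (negbin_coef (e s) j) * y ^ j) * (INR (partial_prod e m (n - s * j)) * x ^ (n - s * j))) by ring.
        apply Rmult_le_compat_l; lra.
      * simpl. rewrite Rmult_0_l.
        pose proof (pos_INR (negbin_coef (e s) j)).
        pose proof (pow_le y j (proj1 Hy)). pose proof (exp_pos (Esum e x m)).
        apply Rmult_le_pos; [apply Rmult_le_pos|]; lra.
    + simpl Esum. fold s. fold y. rewrite exp_plus, Rmult_comm.
      apply Rmult_le_compat_l. left; apply exp_pos.
      apply ssum_bound; auto.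
Qed.

Lemma ln_le_xm1 v : 0 < v -> ln v <= v - 1.
Proof. intros Hv. pose proof (exp_ineq1_le (ln v)). rewrite exp_ln in H by lra. lra. Qed.

Lemma ln_step k : 1 <= k -> / (2 * k) <= ln (k + 1) - ln k.
Proof.
  intros Hk.
  pose proof (ln_le_xm1 (k / (k + 1)) ltac:(apply Rdiv_lt_0_compat; lra)).
  unfold Rdiv in H; rewrite ln_mult, ln_Rinv in H by (try apply Rinv_0_lt_compat; lra).
  assert (k * / (k + 1) - 1 = - / (k + 1)) by (field; lra). rewrite H0 in H.
  assert (/ (2 * k) <= / (k + 1)). { apply Rinv_le_contravar; lra. }
  lra.
Qed.

Lemma Esum_bound (e : nat -> nat) (a2 q : R) : 0 < a2 -> 2 <= q ->
  (forall n : nat, (1 <= n)%nat -> INR (e n) <= a2 * q ^ n / INR n) ->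
  forall m, Esum e (/ q) m <= 4 * a2 * ln (INR m + 1).
Proof.
  intros Ha Hq He. induction m as [|m IH].
  - simpl. rewrite Rplus_0_l, ln_1. lra.
  - change (Esum e (/ q) (S m)) with (Esum e (/ q) m + INR (e (S m)) * ((/ q) ^ (S m) / (1 - (/ q) ^ (S m)))). set (k := INR (S m)).
    assert (Hk : 1 <= k) by (unfold k; rewrite S_INR; pose proof (pos_INR m); lra).
    assert (Hkm : INR m + 1 = k) by (unfold k; rewrite S_INR; ring).
    rewrite Hkm in IH.
    set (Q := q ^ S m).
    assert (HQ : 2 <= Q).
    { unfold Q. apply Rle_trans with (q ^ 1). simpl; lra. apply Rle_pow; [lra|lia]. }
    rewrite <- Rinv_pow by lra. fold Q.
    assert (Hterm : /Q / (1 - /Q) = / (Q - 1)) by (field; lra).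
    rewrite Hterm.
    pose proof (He (S m) ltac:(lia)) as H1. fold k Q in H1.
    assert (Hb : INR (e (S m)) * / (Q - 1) <= 2 * a2 / k).
    { apply Rle_trans with (a2 * Q / k * / (Q - 1)).
      apply Rmult_le_compat_r; [left; apply Rinv_0_lt_compat; lra | lra].
      assert (a2 * Q / k * / (Q - 1) = (a2 / k) * (Q / (Q - 1))) by (field; lra).
      rewrite H. assert (Q / (Q - 1) <= 2).
      { apply Rmult_le_reg_r with (Q - 1). lra. unfold Rdiv. rewrite Rmult_assoc, Rinv_l by lra. lra. }
      assert (0 < a2 / k) by (apply Rdiv_lt_0_compat; lra).
      unfold Rdiv at 2. nra. }
    pose proof (ln_step k Hk).
    assert (2 * a2 / k = 4 * a2 * / (2 * k)) by (field; lra).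
    nra.
Qed.

Lemma pp_0 e m : partial_prod e m 0 = 1%nat.
Proof. induction m; [reflexivity|]. rewrite pp_S. simpl. rewrite nb0, Nat.mul_0_r, IHm. reflexivity. Qed.

Lemma dcoef_ge e n : (1 <= n)%nat -> (e n <= dcoef e n)%nat.
Proof.
  intros Hn. destruct n as [|m]; [lia|]. unfold dcoef. rewrite pp_S.
  simpl seq. simpl map. cbn [list_sum].
  rewrite Nat.mul_1_r, Nat.leb_refl, Nat.sub_diag, pp_0.
  unfold negbin_coef. replace (e (S m) + 1 - 1)%nat with (e (S m)) by lia.
  rewrite binom_1. unfold list_sum. cbn [fold_right]. lia.
Qed.

Lemma exp_mono x y : x <= y -> exp x <= exp y.
Proof. intros [H|H]. left; apply exp_increasing; auto. rewrite H; lra. Qed.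

Theorem proposition2p2 :
  exists A1 A2 : R -> R,
    forall (a1 a2 q : R) (e : nat -> nat),
      0 < a1 -> a1 <= a2 -> 2 <= q ->
      (forall n : nat, (1 <= n)%nat ->
         a1 * q ^ n / INR n <= INR (e n) <= a2 * q ^ n / INR n) ->
      forall n : nat,
        Rpower (INR n + 1) (A1 a1) * q ^ n <= INR (dcoef e n) <=
        Rpower (INR n + 1) (A2 a2) * q ^ n.
Proof.
  exists (fun a => -1 + ln (Rmin a 1) / ln 2), (fun a => 4 * a).
  intros a1 a2 q e Ha1 Ha12 Hq He n.
  assert (Hqp : 0 < q ^ n) by (apply pow_lt; lra).
  assert (Hn1 : 0 < INR n + 1) by (pose proof (pos_INR n); lra).
  split.
  - destruct n as [|m].
    + simpl. unfold dcoef. simpl. rewrite Rplus_0_l. unfold Rpower. rewrite ln_1, Rmult_0_r, exp_0. lra.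
    + set (n := S m) in *.
      assert (Hn : 1 <= INR n) by (unfold n; rewrite S_INR; pose proof (pos_INR m); lra).
      pose proof (dcoef_ge e n ltac:(unfold n; lia)) as Hd. apply le_INR in Hd.
      destruct (He n ltac:(unfold n; lia)) as [Hl _].
      apply Rle_trans with (a1 * q ^ n / INR n); [|lra].
      set (mm := Rmin a1 1).
      assert (Hm0 : 0 < mm) by (unfold mm; apply Rmin_glb_lt; lra).
      assert (Hm1 : mm <= 1) by apply Rmin_r.
      assert (Hma : mm <= a1) by apply Rmin_l.
      assert (Hl2 : 0 < ln 2) by (rewrite <- ln_1; apply ln_increasing; lra).
      assert (Hlm : ln mm <= 0).
      { destruct Hm1 as [Hlt|Heq]. left. rewrite <- ln_1. apply ln_increasing; lra. rewrite Heq, ln_1; lra. }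
      set (c := ln mm / ln 2).
      assert (Hc : c <= 0) by (unfold c, Rdiv; assert (0 < / ln 2) by (apply Rinv_0_lt_compat; lra); nra).
      assert (Hcl : c * ln 2 = ln mm) by (unfold c; field; lra).
      assert (H2n : ln 2 <= ln (INR n + 1)).
      { destruct (Req_dec (INR n) 1) as [E|E]. rewrite E; replace (1+1) with 2 by ring; lra.
        left; apply ln_increasing; lra. }
      assert (Hnn : ln (INR n) <= ln (INR n + 1)) by (left; apply ln_increasing; lra).
      assert (Hla : ln mm <= ln a1).
      { destruct Hma as [Hlt|Heq]. left; apply ln_increasing; lra. rewrite Heq; lra. }
      unfold Rpower.
      assert (Hexp : (-1 + c) * ln (INR n + 1) <= ln a1 - ln (INR n)) by nra.
      apply exp_mono in Hexp.
      assert (exp (ln a1 - ln (INR n)) = a1 / INR n).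
      { unfold Rminus. rewrite exp_plus, exp_Ropp, !exp_ln by lra. reflexivity. }
      rewrite H in Hexp.
      replace (a1 * q ^ n / INR n) with (a1 / INR n * q ^ n) by (field; lra).
      apply Rmult_le_compat_r; lra.
  - assert (Hx : 0 <= / q < 1).
    { split. left; apply Rinv_0_lt_compat; lra. rewrite <- Rinv_1; apply Rinv_lt_contravar; lra. }
    pose proof (pp_bound e (/ q) Hx n n) as H1. fold (dcoef e n) in H1.
    pose proof (Esum_bound e a2 q ltac:(lra) Hq (fun k Hk => proj2 (He k Hk)) n) as H2.
    rewrite <- Rinv_pow in H1 by lra.
    assert (INR (dcoef e n) <= exp (Esum e (/ q) n) * q ^ n).
    { apply Rmult_le_reg_r with (/ q ^ n). apply Rinv_0_lt_compat; lra.
      rewrite Rmult_assoc, Rinv_r by lra. lra. }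
    unfold Rpower. apply Rle_trans with (1 := H).
    apply Rmult_le_compat_r. lra.
    apply exp_mono. lra.
Qed.
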